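(* Let $\tilde\Phi_N=[\tilde A\ \tilde B]$ be the regularized least-squares estimate and $\hat\Phi_N=[\hat A\ \hat B]$ the sparsified estimate described in the context, and let $\tilde\Delta_N=\Phi-\tilde\Phi_N$, $\Delta_N=\Phi-\hat\Phi_N$ with $\Phi=[A\ B]$. If $\|\tilde\Delta_N\|\le\varepsilon$ for some $\varepsilon>0$, then $\|\Delta_N\|\le\sqrt{\psi}\,\varepsilon$, where $\psi$ is the number of strongly connected components of the directed graph $\mathcal{G}(\mathcal{V},\mathcal{A})$.
   Context: Let $\mathcal{V}=[p]$ with block dimensions $n_i,m_i$, $n=\sum n_i$, $m=\sum m_i$. $A\in\mathbb{R}^{n\times n}$, $B\in\mathbb{R}^{n\times m}$ have blocks $A_{ij}\in\mathbb{R}^{n_i\times n_j}$, $B_{ij}\in\mathbb{R}^{n_i\times m_j}$ with $A_{ij}=0$, $B_{ij}=0$ whenever $j\notin\mathcal{N}_i$ for given sets $\mathcal{N}_i\subseteq\mathcal{V}$. $\mathcal{G}(\mathcal{V},\mathcal{A})$ is a directed graph without self loops whose edges carry delays $0$ or $1$; $D_{ij}$ is the minimum total delay over directed paths from $j$ to $i$ ($D_{ii}=0$, $D_{ij}=+\infty$ if there is no such path). It is assumed that $D_{ij}\le1$ for all $j\in\mathcal{N}_i$. Given a trajectory $x_0,\dots,x_N\in\mathbb{R}^n$, $u_0,\dots,u_{N-1}\in\mathbb{R}^m$ of $x_{t+1}=Ax_t+Bu_t+w_t$ and $\lambda>0$, with $z_t=[x_t^\top,u_t^\top]^\top$, $\tilde\Phi_N=\arg\min_{Y\in\mathbb{R}^{n\times(n+m)}}\{\lambda\|Y\|_F^2+\sum_{t=0}^{N-1}\|x_{t+1}-Yz_t\|^2\}$.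 $\hat A,\hat B$ are obtained from $\tilde A,\tilde B$ by setting the blocks $\hat A_{ij}$, $\hat B_{ij}$ to zero exactly for those $(i,j)$ with $D_{ij}=\infty$ (other blocks unchanged). $\|\cdot\|$ is the spectral norm. *)

(* Defs.v *)
From mathcomp Require Import all_boot all_order all_algebra.
From mathcomp Require Import boolp classical_sets reals.
Set Implicit Arguments. Unset Strict Implicit. Unset Printing Implicit Defensive.
Import Order.TTheory GRing.Theory Num.Theory.
Local Open Scope ring_scope.

Definition normsq {R : realType} {k : nat} (v : 'cV[R]_k) : R :=
  \sum_(i < k) v i 0 ^+ 2.

Definition frobsq {R : realType} {a b : nat} (Y : 'M[R]_(a, b)) : R :=
  \sum_(i < a) \sum_(j < b) Y i j ^+ 2.

Definition specnorm {R : realType} {a b : nat} (M : 'M[R]_(a, b)) : R :=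
  sup [set y : R | exists v : 'cV[R]_b,
         normsq v <= 1 /\ y = Num.sqrt (normsq (M *m v))]%classic.

(* e j i : there is a directed edge j -> i ; dl j i : its delay *)
Definition walk_delay {p : nat} (dl : 'I_p -> 'I_p -> nat) (j : 'I_p)
  (s : seq 'I_p) : nat := sumn (pairmap dl j s).

Definition walk_from_to_delay {p : nat} (e : rel 'I_p)
  (dl : 'I_p -> 'I_p -> nat) (j i : 'I_p) (k : nat) : Prop :=
  exists s : seq 'I_p, [/\ path e j s, last j s = i & walk_delay dl j s = k].

(* D_ij <= k  (D_ij = minimal total delay over directed paths from j to i) *)
Definition D_le {p : nat} (e : rel 'I_p) (dl : 'I_p -> 'I_p -> nat)
  (i j : 'I_p) (k : nat) : Prop :=
  exists2 k', (k' <= k)%N & walk_from_to_delay e dl j i k'.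

Definition D_inf {p : nat} (e : rel 'I_p) (dl : 'I_p -> 'I_p -> nat)
  (i j : 'I_p) : Prop :=
  forall k, ~ walk_from_to_delay e dl j i k.

Definition num_scc {p : nat} (e : rel 'I_p) : nat :=
  #|[set [set j | connect e i j && connect e j i] | i : 'I_p]|.

Definition rls_cost {R : realType} {n m : nat} (lam : R) (N : nat)
  (x : nat -> 'cV[R]_n) (u : nat -> 'cV[R]_m) (Y : 'M[R]_(n, n + m)) : R :=
  lam * frobsq Y + \sum_(t < N) normsq (x t.+1 - Y *m col_mx (x t) (u t)).

Definition sparsify {R : realType} {p a b : nat} (e : rel 'I_p)
  (dl : 'I_p -> 'I_p -> nat) (br : 'I_a -> 'I_p) (bc : 'I_b -> 'I_p)
  (M : 'M[R]_(a, b)) : 'M[R]_(a, b) :=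
  \matrix_(r, c) (if `[< D_inf e dl (br r) (bc c) >] then 0 else M r c).

(* Main.v *)
Require Import Defs.
From mathcomp Require Import all_boot all_order all_algebra.
From mathcomp Require Import boolp classical_sets reals.
Import Order.TTheory GRing.Theory Num.Theory.
Local Open Scope ring_scope.

Lemma normsq_ge0 {R : realType} k (v : 'cV[R]_k) : 0 <= normsq v.
Proof. by rewrite /normsq sumr_ge0 // => i _; rewrite sqr_ge0. Qed.

Lemma entry_le1 {R : realType} k (v : 'cV[R]_k) j : normsq v <= 1 -> `|v j 0| <= 1.
Proof.
move=> h; rewrite -(expr_le1 (n:=2)) // -normrX ger0_norm ?sqr_ge0 //.
apply: le_trans h; rewrite /normsq (bigD1 j) //= lerDl.
by apply: sumr_ge0 => i _; rewrite sqr_ge0.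
Qed.

Lemma spec_ub {R : realType} a b (M : 'M[R]_(a, b)) v :
  normsq v <= 1 -> Num.sqrt (normsq (M *m v)) <= specnorm M.
Proof.
move=> hv; apply: sup_upper_bound; last by exists v.
split; first by exists (Num.sqrt (normsq (M *m 0))), 0; split => //;
  rewrite /normsq big1 // => i _; rewrite mxE expr0n.
exists (Num.sqrt (\sum_(i < a) (\sum_(j < b) `|M i j|) ^+ 2)).
move=> y [w [hw ->]]; rewrite ler_sqrt; last first.
  by apply: sumr_ge0 => i _; rewrite sqr_ge0.
apply: ler_sum => i _; rewrite mxE -real_normK ?num_real //.
apply: lerXn2r; rewrite ?nnegrE //; first by apply: sumr_ge0.
apply: le_trans (ler_norm_sum _ _ _) _; apply: ler_sum => j _.
rewrite normrM -[leRHS]mulr1 ler_wpM2l //; exact: entry_le1.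
Qed.
Lemma key {R : realType} p n k (e : rel 'I_p) (br : 'I_n -> 'I_p) (K : 'I_k -> 'I_p)
  (X D : 'M[R]_(n, k)) (eps : R)
  (hD : forall r c, D r c = if connect e (K c) (br r) then X r c else 0)
  (hX : forall w, normsq w <= 1 -> normsq (X *m w) <= eps ^+ 2)
  (v : 'cV[R]_k) : normsq v <= 1 -> normsq (D *m v) <= (num_scc e)%:R * eps ^+ 2.
Proof.
move=> hv.
pose cls' (i : 'I_p) := [set j | connect e i j && connect e j i].
pose C := [set cls' i | i : 'I_p].
rewrite /num_scc -/C /normsq.
rewrite (partition_big (fun r => cls' (br r)) (mem C)) /=; last first.
  by move=> r _; apply: imset_f.
rewrite mulr_natl -sumr_const; apply: ler_sum => S _.
pose w : 'cV[R]_k := \col_c (if [exists i in S, connect e (K c) i] then v c 0 else 0).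
apply: le_trans (hX w _); last first.
  apply: le_trans hv; apply: ler_sum => c _; rewrite mxE.
  by case: ifP => _; rewrite ?expr0n ?sqr_ge0.
rewrite [leRHS](bigID (fun r => cls' (br r) == S)) /=.
rewrite -[X in X <= _]addr0 lerD //; last first.
  by apply: sumr_ge0 => i _; rewrite sqr_ge0.
rewrite le_eqVlt; apply/orP; left; apply/eqP; apply: eq_bigr => r /eqP hS.
rewrite !mxE; congr (_ ^+ 2); apply: eq_bigr => c _; rewrite hD mxE.
have -> : connect e (K c) (br r) = [exists i in S, connect e (K c) i].
  apply/idP/existsP => [h|[i /andP[iS ci]]].
    by exists (br r); rewrite -hS inE connect0 h.
  move: iS; rewrite -hS inE => /andP[_ h]; exact: connect_trans ci h.
by case: ifP => _; rewrite ?mul0r ?mulr0.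
Qed.
Lemma Dinf_conn p (e : rel 'I_p) dl i j :
  `[< D_inf e dl i j >] = ~~ connect e j i.
Proof.
apply/asboolP/negP => [H /connectP[s hs hl]|H k [s [hs hl _]]].
  by apply: (H (walk_delay dl j s)); exists s; split.
by apply: H; apply/connectP; exists s.
Qed.

Theorem lemma5 (R : realType) (p n m : nat)
  (blkx : 'I_n -> 'I_p) (blku : 'I_m -> 'I_p)
  (hblkx : forall a b : 'I_n, (a <= b)%N -> (blkx a <= blkx b)%N)
  (hblku : forall a b : 'I_m, (a <= b)%N -> (blku a <= blku b)%N)
  (Nb : 'I_p -> {set 'I_p})
  (A : 'M[R]_(n, n)) (B : 'M[R]_(n, m))
  (hA : forall r c, blkx c \notin Nb (blkx r) -> A r c = 0)
  (hB : forall r c, blku c \notin Nb (blkx r) -> B r c = 0)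
  (e : rel 'I_p) (dl : 'I_p -> 'I_p -> nat)
  (he_noloop : forall i, ~~ e i i)
  (hdl : forall j i, e j i -> (dl j i <= 1)%N)
  (hD : forall i j, j \in Nb i -> D_le e dl i j 1)
  (N : nat) (x : nat -> 'cV[R]_n) (u : nat -> 'cV[R]_m) (w : nat -> 'cV[R]_n)
  (hsys : forall t, (t < N)%N -> x t.+1 = A *m x t + B *m u t + w t)
  (lam : R) (hlam : 0 < lam)
  (tPhi : 'M[R]_(n, n + m))
  (htPhi : forall Y : 'M[R]_(n, n + m),
      rls_cost lam N x u tPhi <= rls_cost lam N x u Y)
  (eps : R) (heps : 0 < eps)
  (hdelta : specnorm (row_mx A B - tPhi) <= eps) :
  specnorm (row_mx A B
            - row_mx (sparsify e dl blkx blkx (lsubmx tPhi))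
                     (sparsify e dl blkx blku (rsubmx tPhi)))
    <= Num.sqrt ((num_scc e)%:R) * eps.
Proof.
have hX : forall v, normsq v <= 1 -> normsq ((row_mx A B - tPhi) *m v) <= eps ^+ 2.
  move=> v hv; rewrite -[normsq _]sqr_sqrtr ?normsq_ge0 //.
  rewrite ler_sqr ?nnegrE ?sqrtr_ge0 ?(ltW heps) //.
  exact: le_trans (@spec_ub _ _ _ _ _ hv) hdelta.
have zero : forall (i j : 'I_p), j \in Nb i -> connect e j i.
  move=> i j /hD[k _ [s [hs hl _]]]; apply/connectP; exists s => //.
pose K (c : 'I_(n + m)) := match split c with inl a => blkx a | inr b => blku b end.
have hDelta : forall r c, (row_mx A B
            - row_mx (sparsify e dl blkx blkx (lsubmx tPhi))
                     (sparsify e dl blkx blku (rsubmx tPhi))) r c =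
     if connect e (K c) (blkx r) then (row_mx A B - tPhi) r c else 0.
  move=> r c; rewrite -[in RHS](hsubmxK tPhi) !mxE /K.
  case: (split c) => a; rewrite !mxE Dinf_conn; case: ifP => /= h.
  - rewrite (negbTE h) subr0.
    case: (boolP (blkx a \in Nb (blkx r))) => [/zero|/hA ->] //.
    by rewrite (negbTE h).
  - by move/negbFE: h => ->; rewrite ?mxE.
  - rewrite (negbTE h) subr0.
    case: (boolP (blku a \in Nb (blkx r))) => [/zero|/hB ->] //.
    by rewrite (negbTE h).
  - by move/negbFE: h => ->; rewrite ?mxE.
apply: ge_sup.
  exists (Num.sqrt (normsq ((row_mx A B - row_mx (sparsify e dl blkx blkx (lsubmx tPhi)) (sparsify e dl blkx blku (rsubmx tPhi))) *m 0))), 0; split => //.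
  by rewrite /normsq big1 // => i _; rewrite mxE expr0n.


move=> y [v [hv ->]].
have h := @key R p n (n + m) e blkx K _ _ eps hDelta hX v hv.
rewrite -(ger0_norm (ltW heps)) -sqrtr_sqr -sqrtrM // ler_sqrt //.
by rewrite mulr_ge0 ?sqr_ge0.
Qed.
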